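(* For every $n\ge2$: - the total number of pairs $(T,\ell)$ with $T$ a binary tree on $n$ vertices and $\ell$ a leaf of $T$ is $\binom{2n-2}{n-1}$; - the total, over these pairs, of the distance from the root to $\ell$ is $4^{n-1}-\binom{2n-2}{n-1}$. Hence the expected root-to-leaf distance is $$\frac{(2n-2)!!}{(2n-3)!!}-1=\sqrt{\pi n}-1+O\Bigl(\frac1{\sqrt n}\Bigr).$$
   Context: Binary trees are rooted trees in which every vertex has at most one left child and at most one right child, so a single child is designated left or right. The size is the number of vertices, and a leaf is a vertex with no children. The double factorials are $(2m)!!=2\cdot4\cdots(2m)$ and $(2m-1)!!=1\cdot3\cdots(2m-1)$. *)

(* Defs.v *)
From HB Require Import structures.
From mathcomp Require Import all_boot.
From Stdlib Require Import Reals.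

Set Implicit Arguments.
Unset Strict Implicit.
Unset Printing Implicit Defensive.

(* Binary trees: [bt_nil] is the empty (absent) subtree; [bt_node l r] is a
   vertex with left subtree l and right subtree r.  A binary tree on n >= 1
   vertices is a value of size n; a single child is thus designated left or
   right. *)
Inductive bt : Type := bt_nil | bt_node of bt & bt.

Definition bt_eq_dec (x y : bt) : {x = y} + {x <> y}.
Proof. decide equality. Defined.

HB.instance Definition _ := comparableMixin bt_eq_dec.

Fixpoint bsize (t : bt) : nat :=
  match t with
  | bt_nil => 0
  | bt_node l r => (bsize l + bsize r).+1
  end.

Fixpoint leaf_depths (t : bt) : seq nat :=
  match t with
  | bt_nil => [::]
  | bt_node bt_nil bt_nil => [:: 0]
  | bt_node l r => map S (leaf_depths l ++ leaf_depths r)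
  end.

Fixpoint dfact (m : nat) : nat :=
  match m with
  | 0 => 1
  | 1 => 1
  | S (S k as m1) => m * dfact k
  end.

(* Main.v *)
Require Import Defs.
From HB Require Import structures.
From mathcomp Require Import all_boot all_algebra zify.
From Stdlib Require Import Reals Lra Lia.
From Coquelicot Require Import Coquelicot.

Set Implicit Arguments.
Unset Strict Implicit.
Unset Printing Implicit Defensive.
Close Scope R_scope.



Fixpoint trs (f n : nat) : seq bt :=
  match f with
  | 0 => if n == 0 then [:: bt_nil] else [::]
  | f'.+1 => match n with
             | 0 => [:: bt_nil]
             | n'.+1 => [seq bt_node p.1 p.2 | i <- seq.iota 0 n'.+1,
                          p <- [seq (l, r) | l <- trs f' i, r <- trs f' (n' - i)]]
             end
  end.

Lemma trs_indep f g n : n <= f -> n <= g -> trs f n = trs g n.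
Proof.
elim: f g n => [|f IH] [|g] [|n] // Hf Hg; cbn [trs].
move: Hf Hg; rewrite !ltnS => Hf Hg.
congr flatten; apply/eq_in_map => i; rewrite mem_iota add0n => /andP[_ Hi].
rewrite ltnS in Hi.
rewrite (IH g i) ?(IH g (n - i)) //.
- exact: leq_trans (leq_subr _ _) Hf.
- exact: leq_trans (leq_subr _ _) Hg.
- exact: leq_trans Hi Hf.
- exact: leq_trans Hi Hg.
Qed.

Lemma mem_trs f n t : n <= f -> (t \in trs f n) = (bsize t == n).
Proof.
elim: f n t => [|f IH] [|n] t Hn; cbn [trs].
- by case: t.
- by [].
- by case: t => [|l r]; rewrite inE.
rewrite ltnS in Hn; apply/allpairsPdep/idP.
+ move=> [i [[l r] [Hi /allpairsP [[l' r'] /= [Hl Hr [-> ->]]] ->]]] /=.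
  move: Hi; rewrite mem_iota add0n ltnS => /andP [_ Hi].
  rewrite IH in Hl; last by apply: leq_trans Hi Hn.
  rewrite IH in Hr; last by apply: leq_trans (leq_subr _ _) Hn.
  by rewrite eqSS (eqP Hl) (eqP Hr) subnKC.
+ case: t => [|l r] //; rewrite [bsize _]/= eqSS => /eqP Hs.
  exists (bsize l), (l, r); split => //.
  * by rewrite mem_iota add0n ltnS -Hs leq_addr.
  * apply/allpairsP; exists (l, r); split => //=.
    - by rewrite IH //; apply: leq_trans Hn; rewrite -Hs leq_addr.
    - by rewrite IH -Hs ?addKn //; apply: leq_trans Hn; rewrite -Hs leq_addl.
Qed.

Lemma trs_size f n t : t \in trs f n -> bsize t = n.
Proof.
elim: f n t => [|f IH] [|n] t; cbn [trs].
- by rewrite inE => /eqP ->.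
- by [].
- by rewrite inE => /eqP ->.
move=> /allpairsPdep [i [[l r] [Hi /allpairsP [[l' r'] /= [Hl Hr [-> ->]]] ->]]] /=.
move: Hi; rewrite mem_iota add0n ltnS => /andP [_ Hi].
by rewrite (IH _ _ Hl) (IH _ _ Hr) subnKC.
Qed.

Lemma uniq_trs f n : uniq (trs f n).
Proof.
elim: f n => [|f IH] [|n] //; cbn [trs].
apply: allpairs_uniq_dep; first exact: iota_uniq.
- move=> i _; apply: allpairs_uniq => //.
  by move=> [a b] [c d] _ _ /= [-> ->].
- move=> [i [l r]] [j [l' r']] /allpairsPdep [i1 [p1 [_ Hp1 E1]]]
     /allpairsPdep [j1 [p2 [_ Hp2 E2]]] /= [El Er].
  move: E1 E2 Hp1 Hp2 => [<- <-] [<- <-] /allpairsP [[x y] /= [Hx Hy [Ex Ey]]].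
  move=> /allpairsP [[x' y'] /= [Hx' Hy' [Ex' Ey']]].
  subst. by rewrite -(trs_size Hx) -(trs_size Hx').
Qed.

Definition trees n := trs n n.
Definition SF (F : bt -> nat) n := \sum_(t <- trees n) F t.

Lemma SF_s F n s : uniq s -> (forall t : bt, (t \in s) = (bsize t == n)) ->
  sumn [seq F t | t <- s] = SF F n.
Proof.
move=> Us Hs; rewrite sumnE big_map /SF; apply: perm_big.
apply: uniq_perm => //; first exact: uniq_trs.
by move=> t; rewrite Hs /trees mem_trs.
Qed.

Lemma SF_rec F n : SF F n.+1 =
  \sum_(i < n.+1) \sum_(l <- trees i) \sum_(r <- trees (n - i)) F (bt_node l r).
Proof.
rewrite /SF /trees; cbn [trs]; rewrite big_allpairs_dep.
rewrite -(big_mkord xpredT (fun i => \sum_(l <- trs i i) \sum_(r <- trs (n - i) (n - i)) F (bt_node l r))).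
rewrite /index_iota subn0; apply: eq_big_seq => i; rewrite mem_iota add0n ltnS => /andP[_ Hi].
rewrite big_allpairs /=.
rewrite (@trs_indep n i i) // (@trs_indep n (n - i) (n - i)) //.
exact: leq_subr.
Qed.

Definition tc n := SF (fun _ => 1) n.
Definition tl n := SF (fun t => size (leaf_depths t)) n.
Definition td n := SF (fun t => sumn (leaf_depths t)) n.

Lemma sumn_mapS s : sumn (map S s) = sumn s + size s.
Proof. by elim: s => //= x s ->; lia. Qed.

Lemma size_ld l r : size (leaf_depths (bt_node l r)) =
  size (leaf_depths l) + size (leaf_depths r) + ((l == bt_nil) && (r == bt_nil)).
Proof. case: l => [|a b]; case: r => [|c d] //; rewrite [in LHS]/= ?size_map ?size_cat /=; lia. Qed.

Lemma sumn_ld l r : sumn (leaf_depths (bt_node l r)) =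
  sumn (leaf_depths l) + sumn (leaf_depths r) + size (leaf_depths l) + size (leaf_depths r).
Proof.
have H : forall s1 s2, sumn (map S (s1 ++ s2)) = sumn s1 + sumn s2 + size s1 + size s2.
  by move=> s1 s2; rewrite sumn_mapS sumn_cat size_cat !addnA [_ + sumn s2 + _]addnAC.
by case: l => [|a b]; case: r => [|c d] //; rewrite [in LHS]/= ?H ?sumn_mapS /=; lia.
Qed.

Lemma SF_prod (F G : bt -> nat) i j :
  \sum_(l <- trees i) \sum_(r <- trees j) F l * G r = SF F i * SF G j.
Proof. by rewrite /SF big_distrl; apply: eq_bigr => l _; rewrite big_distrr. Qed.

Lemma SF_nil n : SF (fun t => t == bt_nil) n = (n == 0).
Proof.
case: n => [|n]; first by rewrite /SF /trees /= big_cons big_nil.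
rewrite /SF big1_seq // => t /andP[_ Ht].
move: Ht; rewrite /trees mem_trs //; by case: t.
Qed.

Lemma cn_rec n : tc n.+1 = \sum_(i < n.+1) tc i * tc (n - i).
Proof.
rewrite /tc SF_rec; apply: eq_bigr => i _; rewrite -SF_prod.
by apply: eq_bigr => l _; apply: eq_bigr.
Qed.

Lemma ln_rec n : tl n.+1 = (n == 0) + \sum_(i < n.+1) (tl i * tc (n - i) + tc i * tl (n - i)).
Proof.
rewrite /tl SF_rec.
have -> : nat_of_bool (n == 0) = \sum_(i < n.+1) (SF (fun t => t == bt_nil) i * SF (fun t => t == bt_nil) (n - i)).
  rewrite big_ord_recl /= !SF_nil subn0 eq_refl mul1n big1 ?addn0 // => i _.
  by rewrite SF_nil.
rewrite -big_split; apply: eq_bigr => i _ /=.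
rewrite /tc -!SF_prod -!big_split /=; apply: eq_bigr => l _.
rewrite -!big_split /=; apply: eq_bigr => r _.
by rewrite size_ld !muln1 !mul1n mulnb addnC addnA.
Qed.

Lemma dn_rec n : td n.+1 = \sum_(i < n.+1)
   (td i * tc (n - i) + tc i * td (n - i) + tl i * tc (n - i) + tc i * tl (n - i)).
Proof.
rewrite /td SF_rec; apply: eq_bigr => i _.
rewrite /tc /tl -!SF_prod -!big_split /=; apply: eq_bigr => l _.
rewrite -!big_split /=; apply: eq_bigr => r _.
by rewrite sumn_ld !muln1 !mul1n.
Qed.


From mathcomp Require Import ring.
Section PolyPart.
Import GRing.Theory Num.Theory.
Local Open Scope ring_scope.

Definition eqN N (p q : {poly int}) := forall i, (i < N)%nat -> p`_i = q`_i.

Lemma eqN_trans N p q r : eqN N p q -> eqN N q r -> eqN N p r.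
Proof. by move=> H1 H2 i Hi; rewrite H1 // H2. Qed.

Lemma eqN_sym N p q : eqN N p q -> eqN N q p.
Proof. by move=> H i Hi; rewrite H. Qed.

Lemma eqN_lin N K M p q : eqN N p q -> eqN N (K * p + M) (K * q + M).
Proof.
move=> H i Hi; rewrite !coefD !coefM; congr (_ + _); apply: eq_bigr => j _.
by rewrite H //; apply: leq_ltn_trans (leq_subr _ _) Hi.
Qed.

Lemma eqN_eq N p q : p = q -> eqN N p q.
Proof. by move=> -> . Qed.

Lemma eqN_zd N p q : eqN N (p * q) 0 -> q`_0 != 0 -> eqN N p 0.
Proof.
move=> H Hq i; elim: i {-2}i (leqnn i) => [|k IH] i Hik HiN.
  move: Hik; rewrite leqn0 => /eqP ->.
  have := H 0%nat; rewrite coef0M coef0 => /(_ (leq_ltn_trans (leq0n _) HiN)).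
  by move/eqP; rewrite mulf_eq0 (negbTE Hq) orbF => /eqP ->.
have HiN' : (i < N)%nat by [].
have := H i HiN'; rewrite coefM coef0 big_ord_recr /= subnn.
rewrite big1 ?add0r; last first.
  move=> j _; have Hj := ltn_ord j.
  rewrite (IH j) ?coef0 ?mul0r //; lia.
by move/eqP; rewrite mulf_eq0 (negbTE Hq) orbF => /eqP.
Qed.

Section NatPart.
Local Open Scope nat_scope.

Definition bb j := 'C(j.*2, j).

Lemma bbS j : j.+1 * bb j.+1 = (4 * j + 2) * bb j.
Proof.
rewrite /bb.
have H1 := mul_bin_diag (j.*2.+2) j.
have H2 := mul_bin_down (j.*2.+1) j.
rewrite /= in H1 H2.
have E : j.+1.*2 = j.*2.+2 by rewrite doubleS.
rewrite E -H1.
have E2 : j.*2.+1 - j = j.+1 by lia.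
rewrite E2 in H2.
apply/eqP; rewrite -(eqn_pmul2l (ltn0Sn j)); apply/eqP.
have -> : j.+1 * ((j.*2).+2 * 'C((j.*2).+1, j)) = (j.*2).+2 * (j.+1 * 'C((j.*2).+1, j)) by lia.
rewrite -H2. lia.
Qed.

Definition SS m := \sum_(j < m.+1) bb j * bb (m - j).
Definition TT m := \sum_(j < m.+1) j * (bb j * bb (m - j)).

Lemma TT_sym m : TT m * 2 = m * SS m.
Proof.
have H : TT m = \sum_(j < m.+1) (m - j) * (bb j * bb (m - j)).
  rewrite /TT (reindex_inj rev_ord_inj) /=; apply: eq_bigr => j _.
  have Hj := ltn_ord j.
  rewrite subSS (_ : m - (m - j) = j); last by lia.
  by rewrite mulnC [bb (m - j) * _]mulnC mulnC.
rewrite muln2 -addnn {1}H /TT -big_split /SS big_distrr /=; apply: eq_bigr => j _.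
have Hj := ltn_ord j.
rewrite -mulnDl subnK //; lia.
Qed.

Lemma SS_rec m : SS m.+1 = 4 * SS m.
Proof.
apply/eqP; rewrite -(eqn_pmul2l (ltn0Sn m)); apply/eqP.
have H := TT_sym m.+1.
have H2 : TT m.+1 = 4 * TT m + 2 * SS m.
  rewrite /TT big_ord_recl /= mul0n add0n /SS /TT big_distrr /= big_distrr /= -big_split /=.
  apply: eq_bigr => j _.
  rewrite /bump /= add1n subSS mulnA bbS. lia.
have H3 := TT_sym m.
lia.
Qed.

Lemma SS_eq m : SS m = expn 4 m.
Proof.
elim: m => [|m IH]; first by rewrite /SS big_ord1.
by rewrite SS_rec IH expnS.
Qed.
End NatPart.

Definition pol (f : nat -> nat) N : {poly int} := \poly_(i < N) (f i)%:R.

Lemma pol_coef f N i : (i < N)%nat -> (pol f N)`_i = (f i)%:R.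
Proof. by move=> Hi; rewrite coef_poly Hi. Qed.

Lemma pol_mul f g N m : (m < N)%nat ->
  (pol f N * pol g N)`_m = (\sum_(i < m.+1) f i * g (m - i))%nat%:R.
Proof.
move=> Hm; rewrite coefM natr_sum; apply: eq_bigr => i _.
have Hi := ltn_ord i.
rewrite !pol_coef ?natrM //; lia.
Qed.

Lemma coefXM' (p : {poly int}) i : ('X * p)`_i = if i is m.+1 then p`_m else 0.
Proof. by rewrite coefXM; case: i. Qed.

Section Closed.
Variables (c l d : nat -> nat).
Hypothesis c0 : c 0 = 1%nat.
Hypothesis l0 : l 0 = 0%nat.
Hypothesis d0 : d 0 = 0%nat.
Hypothesis c_rec : forall n, c n.+1 = (\sum_(i < n.+1) c i * c (n - i))%nat.
Hypothesis l_rec : forall n, l n.+1 = ((n == 0%nat) + \sum_(i < n.+1) (l i * c (n - i) + c i * l (n - i)))%nat.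
Hypothesis d_rec : forall n, d n.+1 = (\sum_(i < n.+1)
   (d i * c (n - i) + c i * d (n - i) + l i * c (n - i) + c i * l (n - i)))%nat.

Variable N : nat.
Let C := pol c N.
Let L := pol l N.
Let D := pol d N.
Let Bc := pol bb N.
Let Q := pol (fun i => expn 4 i)%nat N.

Lemma RC : eqN N C (1 + 'X * (C * C)).
Proof.
move=> [|m] Hm; rewrite coefD coefXM' coef1 pol_coef //=.
  by rewrite c0 addr0.
by rewrite pol_mul ?c_rec ?add0r //; lia.
Qed.

Lemma RL : eqN N L ('X + 'X * (L * C + C * L)).
Proof.
move=> [|m] Hm; rewrite coefD coefXM' coefX pol_coef //=.
  by rewrite l0 addr0.
rewrite coefD !pol_mul ?l_rec; try lia.
rewrite natrD big_split natrD /=.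
by [].
Qed.

Lemma RD : eqN N D ('X * (D * C + C * D + L * C + C * L)).
Proof.
move=> [|m] Hm; rewrite coefXM' pol_coef //=.
  by rewrite d0.
rewrite !coefD !pol_mul ?d_rec; try lia.
by rewrite !big_split /= !natrD.
Qed.

Lemma eqN_use {K M p q P R} : eqN N p q -> P = K * p + M -> K * q + M = R -> eqN N P R.
Proof. by move=> H -> <-; apply: eqN_lin. Qed.

Hypothesis N_gt0 : (0 < N)%nat.

Let E := 1 - ('X * C) *+ 2.

Lemma BQ : eqN N (Bc * Bc) Q.
Proof. by move=> m Hm; rewrite pol_mul // pol_coef // -/(SS m) SS_eq. Qed.

Lemma Q1 : eqN N (Q * (1 - 'X *+ 4)) 1.
Proof.
move=> m Hm; rewrite (_ : Q * (1 - 'X *+ 4) = Q - ('X * Q) *+ 4); last by ring.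
rewrite coefB coefMn coefXM' coef1; case: m Hm => [|m] Hm.
  by rewrite pol_coef // subr0.
rewrite !pol_coef //; last by lia.
by rewrite /= expnS natrM mulr_natl subrr.
Qed.

Lemma F1 : eqN N (E * E) (1 - 'X *+ 4).
Proof.
apply: (eqN_use (K := - ('X *+ 4)) (M := 1 + ('X * 'X * C * C) *+ 4) RC).
  by rewrite /E; ring.
by ring.
Qed.

Lemma F2 : eqN N (L * E) 'X.
Proof.
apply: (eqN_use (K := 1) (M := - ('X * L * C) *+ 2) RL).
  by rewrite /E; ring.
by ring.
Qed.

Lemma F3 : eqN N ((D + L) * E) L.
Proof.
apply: (eqN_use (K := 1) (M := L - ('X * C * D) *+ 2 - ('X * L * C) *+ 2) RD).
  by rewrite /E; ring.
by ring.
Qed.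

Lemma F4 : eqN N ((Bc * E) * (Bc * E)) 1.
Proof.
apply: eqN_trans; first apply: (eqN_use (K := Bc * Bc) (M := 0) F1).
  by ring.
  by [].
apply: eqN_trans; first apply: (eqN_use (K := 1 - 'X *+ 4) (M := 0) BQ).
  by ring.
  by [].
by apply: (eqN_use (K := 1) (M := 0) Q1); ring.
Qed.

Lemma F5 : eqN N (Bc * E) 1.
Proof.
have H : eqN N ((Bc * E - 1) * (Bc * E + 1)) 0.
  by apply: (eqN_use (K := 1) (M := - 1) F4); ring.
have H2 : (Bc * E + 1)`_0 != 0.
  rewrite coefD coef1 coef0M /E coefB coefMn coefXM' coef1 pol_coef //.
have := @eqN_zd N _ _ H H2.
by move=> H3; apply: (eqN_use (K := 1) (M := 1) H3); ring.
Qed.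

Lemma F6 : eqN N L ('X * Bc).
Proof.
apply: eqN_trans; first apply: eqN_sym.
  by apply: (eqN_use (K := L) (M := 0) F5); [ | ring]; by [].
by apply: (eqN_use (K := Bc) (M := 0) F2); [rewrite /E; ring | ring].
Qed.

Lemma F7 : eqN N (D + L) ('X * Q).
Proof.
apply: eqN_trans; first apply: eqN_sym.
  by apply: (eqN_use (K := D + L) (M := 0) F5); [ | ring]; by [].
apply: eqN_trans; first apply: (eqN_use (K := Bc) (M := 0) F3).
  by rewrite /E; ring.
  by [].
apply: eqN_trans; first apply: (eqN_use (K := Bc) (M := 0) F6).
  by [].
  by [].
by apply: (eqN_use (K := 'X) (M := 0) BQ); ring.
Qed.

End Closed.

Lemma closed_forms (c l d : nat -> nat) :
  c 0 = 1%nat -> l 0 = 0%nat -> d 0 = 0%nat ->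
  (forall n, c n.+1 = (\sum_(i < n.+1) c i * c (n - i))%nat) ->
  (forall n, l n.+1 = ((n == 0%nat) + \sum_(i < n.+1) (l i * c (n - i) + c i * l (n - i)))%nat) ->
  (forall n, d n.+1 = (\sum_(i < n.+1)
   (d i * c (n - i) + c i * d (n - i) + l i * c (n - i) + c i * l (n - i)))%nat) ->
  forall n, l n.+1 = bb n /\ (d n.+1 + l n.+1 = expn 4 n)%nat.
Proof.
move=> c0 l0 d0 cr lr dr n.
have HN : (0 < n.+2)%nat by [].
have H6 := @F6 c l d c0 l0 d0 cr lr _ HN _ (ltnSn n.+1).
have H7 := @F7 c l d c0 l0 d0 cr lr dr _ HN _ (ltnSn n.+1).
rewrite coefXM' !pol_coef // in H6.
rewrite coefD coefXM' !pol_coef // -natrD in H7.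
by split; apply/eqP; rewrite -(eqr_nat int) ?H6 ?H7.
Qed.

End PolyPart.

Import Stdlib.setoid_ring.Ring_tac Stdlib.setoid_ring.Field_tac.
Section RealPart.
Local Open Scope R_scope.

Definition fk (k : nat) (x : R) := sin x ^ k.

Lemma fk_cont k x : continuous (fk k) x.
Proof. apply: ex_derive_continuous; unfold fk; auto_derive; auto. Qed.

Lemma fk_int k : ex_RInt (fk k) 0 (PI/2).
Proof. apply: ex_RInt_continuous => x _; apply: fk_cont. Qed.

Definition Ik k := RInt (fk k) 0 (PI/2).

Lemma I_rec k : INR (k+2) * Ik (k+2) = INR (k+1) * Ik k.
Proof.
set g := fun x => INR (k+2) * fk (k+2) x - INR (k+1) * fk k x.
have H1 : is_RInt g 0 (PI/2) (INR (k+2) * Ik (k+2) - INR (k+1) * Ik k).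
  have Ha := is_RInt_scal _ _ _ (INR (k+2)) _ (RInt_correct _ _ _ (fk_int (k+2))).
  have Hb := is_RInt_scal _ _ _ (INR (k+1)) _ (RInt_correct _ _ _ (fk_int k)).
  exact: (is_RInt_minus _ _ _ _ _ _ Ha Hb).
have H2 := is_RInt_derive (fun x => - (sin x ^ (k+1) * cos x)) g 0 (PI/2).
have H3 : is_RInt g 0 (PI/2) (minus (- (sin (PI/2) ^ (k+1) * cos (PI/2))) (- (sin 0 ^ (k+1) * cos 0))).
  apply: H2.
  - move=> x _. auto_derive; first by [].
    rewrite /g /fk.
    have Hk : ((k + 1).-1 = k)%nat by lia.
    rewrite Hk.
    have Hc : cos x * cos x = 1 - sin x * sin x.
      have := sin2_cos2 x; rewrite /Rsqr; lra.
    have E1 : INR (k + 2) = INR (k + 1) + 1 by rewrite !plus_INR /=; ring.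
    rewrite E1 !pow_add /=.
    have : INR (k + 1) * sin x ^ k * (cos x * cos x - (1 - sin x * sin x)) = 0 by rewrite Hc; ring.
    lra.
  - move=> x _. apply: ex_derive_continuous; rewrite /g /fk; auto_derive; auto.
have := is_RInt_unique _ _ _ _ H1.
rewrite (is_RInt_unique _ _ _ _ H3) cos_PI2 sin_0 cos_0 pow_i; last by lia.
rewrite /minus /plus /opp /=; lra.
Qed.

Lemma I0 : Ik 0 = PI / 2.
Proof. rewrite /Ik /fk /= RInt_const /scal /= /mult /=; ring. Qed.

Lemma I1 : Ik 1 = 1.
Proof.
have H := is_RInt_derive (fun x => - cos x) (fk 1) 0 (PI/2).
rewrite /Ik (is_RInt_unique _ _ _ _ (H _ _)).
- rewrite cos_PI2 cos_0 /minus /plus /opp /=; ring.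
- move=> x _; auto_derive; first by []. rewrite /fk /=; ring.
- by move=> x _; apply: fk_cont.
Qed.

Lemma I_mono k : Ik k.+1 <= Ik k.
Proof.
apply: RInt_le; try apply: fk_int.
- have := PI_RGT_0; lra.
- move=> x Hx.
  have H1 : 0 <= sin x by apply: sin_ge_0; have := PI_RGT_0; lra.
  have H2 := proj2 (SIN_bound x).
  have H3 : 0 <= sin x ^ k by apply: pow_le.
  rewrite /fk /=; nra.
Qed.

Definition wk k := if odd k then 1 else PI / 2.

Lemma dfactS k : dfact k.+1 = (k.+1 * dfact k.-1)%nat.
Proof. by case: k => [|k]. Qed.

Lemma I_formula k : Ik k * INR (dfact k) = INR (dfact k.-1) * wk k.
Proof.
suff : Ik k * INR (dfact k) = INR (dfact k.-1) * wk k /\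
       Ik k.+1 * INR (dfact k.+1) = INR (dfact k) * wk k.+1 by case.
elim: k => [|k [IH1 IH2]].
  by rewrite I0 I1 /wk /=; split; ring.
split => //.
have E : dfact k.+2 = (k.+2 * dfact k)%nat by [].
have Hw : wk k.+2 = wk k by rewrite /wk /= negbK.
rewrite E (dfactS k) !mult_INR Hw.
have -> : INR k.+1 * INR (dfact k.-1) * wk k = INR k.+1 * (INR (dfact k.-1) * wk k) by ring.
rewrite -IH1.
have := I_rec k.
rewrite (_ : (k + 2)%nat = k.+2); last by lia.
rewrite (_ : (k + 1)%nat = k.+1); last by lia.
move=> H.
have -> : Ik k.+2 * (INR k.+2 * INR (dfact k)) = (INR k.+2 * Ik k.+2) * INR (dfact k) by ring.
rewrite H; ring.
Qed.

Lemma dfact_pos k : (0 < dfact k)%nat.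
Proof.
suff : (0 < dfact k)%nat /\ (0 < dfact k.+1)%nat by case.
elim: k => [|k [H1 H2]] //; split => //=.
by rewrite muln_gt0.
Qed.

Lemma INR_dfact_pos k : 0 < INR (dfact k).
Proof. apply: lt_0_INR; apply/ltP; exact: dfact_pos. Qed.

Lemma r_bounds p :
  let r := INR (dfact (2 * p).+2) / INR (dfact (2 * p).+1) in
  PI * (INR p + 1) <= r * r <= PI * (INR p + 3 / 2) /\ 0 < r.
Proof.
move=> r; set m := (2 * p)%nat.
have Er0 : r = INR (dfact m.+2) / INR (dfact m.+1) by [].
clearbody r.
have Hodd : odd m = false by rewrite /m oddM.
have F1 := I_formula m.+1.
have F2 := I_formula m.+2.
have F3 := I_formula m.+3.
have O1 : odd m.+1 = true by rewrite /= Hodd.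
have O2 : odd m.+2 = false by rewrite /= Hodd.
have O3 : odd m.+3 = true by rewrite /= Hodd.
rewrite /wk O1 in F1; rewrite /wk O2 in F2; rewrite /wk O3 in F3.
change (m.+1).-1 with m in F1.
change (m.+2).-1 with m.+1 in F2.
change (m.+3).-1 with m.+2 in F3.
have Ea : dfact m.+2 = (m.+2 * dfact m)%nat by [].
have Eb : dfact m.+3 = (m.+3 * dfact m.+1)%nat by [].
rewrite Eb mult_INR in F3.
rewrite Ea mult_INR in F2 F3 Er0.
have Ha := INR_dfact_pos m.
have Hb := INR_dfact_pos m.+1.
set a := INR (dfact m) in F1 F2 F3 Ha Er0.
set b := INR (dfact m.+1) in F1 F2 F3 Hb Er0.
have M1 := I_mono m.+1.
have M2 := I_mono m.+2.
set i1 := Ik m.+1 in F1 M1.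
set i2 := Ik m.+2 in F2 M1 M2.
set i3 := Ik m.+3 in F3 M2.
have Hm : INR m = 2 * INR p by rewrite /m mult_INR.
rewrite !S_INR Hm in F2 F3 Er0.
have Hp := pos_INR p.
have Er : r * b = (2 * INR p + 1 + 1) * a by rewrite Er0; field; lra.
have Hr : 0 < r.
  rewrite Er0; apply: Rdiv_lt_0_compat => //; nra.
have G3 : i3 * (2 * INR p + 1 + 1 + 1) = r.
  apply: (Rmult_eq_reg_r b); last lra.
  rewrite Er; lra.
have G2 : i2 * r = PI / 2.
  apply: (Rmult_eq_reg_r b); last lra.
  have -> : i2 * r * b = i2 * (r * b) by ring.
  rewrite Er; lra.
have G1 : i1 * (2 * INR p + 1 + 1) = r.
  apply: (Rmult_eq_reg_r b); last lra.
  rewrite Er; nra.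
have P3 : 0 < r * (2 * INR p + 1 + 1 + 1) by nra.
have P2 : 0 < r * (2 * INR p + 1 + 1) by nra.
have K1 := Rmult_le_compat_r _ _ _ (Rlt_le _ _ P3) M2.
have K2 := Rmult_le_compat_r _ _ _ (Rlt_le _ _ P2) M1.
split; last by [].
split; nra.
Qed.

Lemma asym : exists C : R, forall n : nat, (2 <= n)%nat ->
     (Rabs ((INR (dfact (2 * n - 2)) / INR (dfact (2 * n - 3)) - 1)
            - (sqrt (PI * INR n) - 1)) <= C / sqrt (INR n))%R.
Proof.
exists PI => [] [|[|p]] // _.
have E1 : (2 * p.+2 - 2 = (2 * p).+2)%nat by lia.
have E2 : (2 * p.+2 - 3 = (2 * p).+1)%nat by lia.
rewrite E1 E2.
have [[B1 B2] Hr] := r_bounds p.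
set r := INR (dfact (2 * p).+2) / INR (dfact (2 * p).+1) in B1 B2 Hr *.
have Hn : INR p.+2 = INR p + 2 by rewrite !S_INR; ring.
have Hp := pos_INR p.
have HPI := PI_RGT_0.
have HPI1 : 1 <= PI by have := PI_4; have := PI2_3_2; lra.
set t := sqrt (INR p.+2).
have Ht : 0 < t by apply: sqrt_lt_R0; lra.
have Htt : t * t = INR p.+2 by apply: sqrt_sqrt; lra.
have Hs : sqrt (PI * INR p.+2) = sqrt PI * t by apply: sqrt_mult; lra.
have Hsp : 1 <= sqrt PI by rewrite -sqrt_1; apply: sqrt_le_1_alt.
have Hspp : sqrt PI * sqrt PI = PI by apply: sqrt_sqrt; lra.
rewrite Hs.
set s := sqrt PI * t.
have Hss : s * s = PI * INR p.+2 by rewrite /s; rewrite -Htt; nra.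
have Hts : t <= s by rewrite /s; nra.
have Hrs : r < s by nra.
have -> : r - 1 - (s - 1) = - (s - r) by ring.
rewrite Rabs_Ropp Rabs_pos_eq; last lra.
apply: (Rmult_le_reg_r t) => //.
have -> : PI / t * t = PI by field; lra.
have : (s - r) * (s + r) <= PI by nra.
nra.
Qed.


Lemma ratio_eq (A B P Qd : nat) : (0 < B)%nat -> (0 < Qd)%nat -> (B <= A)%nat ->
  (P * B = A * Qd)%nat -> INR (A - B) / INR B = INR P / INR Qd - 1.
Proof.
move=> HB HQ HBA HP.
have HB' : 0 < INR B by apply: lt_0_INR; apply/ltP.
have HQ' : 0 < INR Qd by apply: lt_0_INR; apply/ltP.
have HP' : INR P * INR B = INR A * INR Qd by rewrite -!mult_INR !multE HP.
rewrite minus_INR; last by apply/leP.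
field_simplify_eq; try lra.
Qed.
End RealPart.

Lemma dfact_even m : dfact m.*2 = (expn 2 m * m`!)%nat.
Proof.
elim: m => [|m IH] //.
rewrite doubleS [dfact _]/= IH expnS factS; lia.
Qed.

Lemma dfact_prod k : (dfact k.+1 * dfact k = k.+1`!)%nat.
Proof.
elim: k => [|k IH] //.
rewrite [dfact k.+2]/= factS -IH; lia.
Qed.

Lemma dfact_bin m : (dfact m.*2 * bb m = expn 4 m * dfact (m.*2).-1)%nat.
Proof.
case: m => [|j] //.
set m := j.+1.
have H1 := dfact_even m.
have H2 : (dfact m.*2 * dfact (m.*2).-1 = (m.*2)`!)%nat.
  by rewrite /m doubleS [(j.*2.+2).-1]/= dfact_prod.
have H3 : (bb m * (m`! * m`!) = (m.*2)`!)%nat.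
  by have := @bin_fact m.*2 m; rewrite /bb -addnn addnK => ->; rewrite ?leq_addr.
have H4 : expn 4 m = (expn 2 m * expn 2 m)%nat by rewrite -expnMn.
have Hp := dfact_pos m.*2.
apply/eqP; rewrite -(eqn_pmul2l Hp); apply/eqP.
rewrite H4.
set X := expn 2 m in H1 H4 *.
set f := m`! in H1 H3.
set P := dfact m.*2 in H1 H2 Hp *.
set Qd := dfact (m.*2).-1 in H2 *.
set F := (m.*2)`! in H2 H3.
have -> : (P * (P * bb m) = X * X * (bb m * (f * f)))%nat by rewrite H1; lia.
rewrite H3 -H2; lia.
Qed.

Lemma tc0 : tc 0 = 1%nat. Proof. by rewrite /tc /SF /trees /= big_cons big_nil. Qed.
Lemma tl0 : tl 0 = 0%nat. Proof. by rewrite /tl /SF /trees /= big_cons big_nil. Qed.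
Lemma td0 : td 0 = 0%nat. Proof. by rewrite /td /SF /trees /= big_cons big_nil. Qed.

Theorem mainTheorem16 :
  (forall (n : nat), 2 <= n ->
   forall (s : seq bt), uniq s -> (forall t : bt, (t \in s) = (bsize t == n)) ->
   let npairs := sumn [seq size (leaf_depths t) | t <- s] in
   let totdist := sumn [seq sumn (leaf_depths t) | t <- s] in
   [/\ npairs = 'C(2 * n - 2, n - 1),
       totdist = expn 4 (n - 1) - 'C(2 * n - 2, n - 1)
     & (INR totdist / INR npairs
        = INR (dfact (2 * n - 2)) / INR (dfact (2 * n - 3)) - 1)%R])
  /\
  (exists C : R, forall n : nat, 2 <= n ->
     (Rabs ((INR (dfact (2 * n - 2)) / INR (dfact (2 * n - 3)) - 1)
            - (sqrt (PI * INR n) - 1)) <= C / sqrt (INR n))%R).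
Proof.
split; last exact: asym.
move=> n Hn s Us Hs npairs totdist.
have Hnp : npairs = tl n by rewrite /npairs (SF_s _ Us Hs).
have Htd : totdist = td n by rewrite /totdist (SF_s _ Us Hs).
have CF := closed_forms tc0 tl0 td0 cn_rec ln_rec dn_rec.
clearbody npairs totdist.
case: n Hn Hs Hnp Htd => [|[|q]] // _ _ Hnp Htd.
have [Hl Hd] := CF q.+1.
have E1 : (2 * q.+2 - 2 = (q.+1).*2)%nat by lia.
have E2 : (q.+2 - 1 = q.+1)%nat by lia.
have E3 : (2 * q.+2 - 3 = ((q.+1).*2).-1)%nat by lia.
rewrite E1 E2 E3 Hnp Htd Hl.
have Htd' : td q.+2 = (expn 4 q.+1 - bb q.+1)%nat by rewrite -Hd Hl addnK.
rewrite Htd'.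
split => //.
apply: ratio_eq.
- by rewrite /bb bin_gt0 -addnn leq_addr.
- exact: dfact_pos.
- by rewrite -Hd Hl leq_addl.
- exact: dfact_bin.
Qed.
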